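(* Let $u^h$ be the solutions of the hybrid discrete problem and $u^*,u_*$ their upper and lower half-relaxed limits. Then at every regular point $x\in\Omega_r$, $u_*(x)=u^*(x)=u(x)$, and consequently $u_*$ and $u^*$ are viscosity solutions at $x$ of $\det D^2w=f$ together with $\max(-\lambda_1[w],0)=0$.
   Context: Setting. Let $n\ge 2$, $\Omega=(0,1)^n$, $f\in C(\overline\Omega)$ with $f>0$, and $g\in C(\partial\Omega)$ admitting a convex extension $\tilde g\in C(\overline\Omega)$. Let $u$ be the unique convex viscosity solution of $\det D^2u=f$ in $\Omega$, $u=g$ on $\partial\Omega$. Let $h>0$ with $1/h\in\mathbb Z$, $\mathbb Z_h=\{x\in\mathbb R^n: x_i/h\in\mathbb Z\ \forall i\}$, $\Omega^h=\overline\Omega\cap\mathbb Z_h$, $\Omega^h_0=\Omega\cap\mathbb Z_h$, $\partial\Omega^h=\Omega^h\setminus\Omega^h_0$; $r_h(v)$ is the restriction of a function $v$ to the grid. With $e^i$ the unit vectors, $\partial^i_+v^h(x)=(v^h(x+he^i)-v^h(x))/h$, $\partial^i_-v^h(x)=(v^h(x)-v^h(x-he^i))/h$, $D_hv^h=(\partial^i_+v^h)_i$, $\operatorname{div}_h(v^{h,i})_i=\sum_i\partial^i_-v^{h,i}$, and the discrete Hessian $\mathcal H_dv^h=(\partial^j_-\partial^i_+v^h)_{i,j}$. A point $x\in\Omega$ is regular if $u$ is $C^2$ in a neighborhood of $x$. Let $\Omega_r\subset\Omega$ be an open bounded convex set consisting of regular points. Put $\Omega_r^h=\overline{\Omega_r}\cap\mathbb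 Z_h$, let $\Omega^h_{r,0}$ be the set of $x\in\Omega_r^h$ at which $\mathcal H_dv^h(x)$ is defined using only values at points of $\Omega_r^h$, and $\Omega_s^h=\Omega^h_0\setminus\Omega^h_{r,0}$. Define $M_r[v^h]=\frac1n\operatorname{div}_h[(\operatorname{cof}\operatorname{sym}\mathcal H_dv^h)^TD_hv^h]$. For $x\in\Omega_0^h$ let $W_h(x)$ be the set of orthogonal bases $(\alpha_1,\dots,\alpha_n)$ of $\mathbb R^n$ with $x\pm\alpha_i\in\Omega^h$, and $M_s^+[v^h](x)=\inf_{W_h(x)}\prod_{i=1}^n\max\big(\frac{v^h(x+\alpha_i)-2v^h(x)+v^h(x-\alpha_i)}{|\alpha_i|^2},0\big)$. The hybrid operator is $F_h(v^h)(x)=M_s^+[v^h](x)-f(x)$ on $\Omega_s^h$ and $F_h(v^h)(x)=M_r[v^h](x)-f(x)$ on $\Omega^h_{r,0}$; the hybrid discrete problem is $F_h(u^h)=0$ on $\Omega^h_0$, $u^h=r_h(g)$ on $\partial\Omega^h$, and $u^h$ denotes its solution in $\{v^h: |v^h-r_h(u)|_{1,h}\le C_*h^{2+n/2},\ v^h=r_h(g)\text{ on }\partial\Omega^h,\ v^h=r_h(u)\text{ on }\Omega_r^h\setminus\Omega^h_{r,0}\}$ for a fixed constant $C_*$ and $h$ small, where $|v^h|_{1,h}=(h^n\sum_i\sum_{x\in\Omega^h_{r,0}}(\partial^i_+v^h(x))^2)^{1/2}$. The half-relaxed limits are $u^*(x)=\lim_{\delta\to0}\sup\{u^h(y): y\in\Omega^h_0,|y-x|\le\delta,0<h\le\delta\}$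 and $u_*(x)=\lim_{\delta\to0}\inf\{u^h(y): y\in\Omega^h_0,|y-x|\le\delta,0<h\le\delta\}$. $\lambda_1[w]$ denotes the smallest eigenvalue of the Hessian, understood in the viscosity sense. *)

(* Defs.v *)
From Stdlib Require Import Reals Lra ZArith Classical ClassicalEpsilon.
Open Scope R_scope.

(** Points of R^n are represented as [nat -> R]; a point is "canonical"
    when its coordinates of index >= n vanish.  All sets below only contain
    canonical points. *)
Definition pt := nat -> R.

Definition canon (n : nat) (x : pt) : Prop := forall i, (n <= i)%nat -> x i = 0.

Definition vadd (x y : pt) : pt := fun i => x i + y i.
Definition vsub (x y : pt) : pt := fun i => x i - y i.
Definition vscale (t : R) (x : pt) : pt := fun i => t * x i.
Definition e (i : nat) : pt := fun j => if Nat.eqb j i then 1 else 0.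
Definition upd (p : pt) (d : nat) (r : R) : pt := fun i => if Nat.eqb i d then r else p i.

Fixpoint sumn (k : nat) (F : nat -> R) : R :=
  match k with O => 0 | S k' => sumn k' F + F k' end.
Fixpoint prodn (k : nat) (F : nat -> R) : R :=
  match k with O => 1 | S k' => prodn k' F * F k' end.

Definition dot (n : nat) (x y : pt) : R := sumn n (fun i => x i * y i).
Definition distn (n : nat) (x y : pt) : R := sqrt (dot n (vsub x y) (vsub x y)).

Definition minor (A : nat -> nat -> R) (i j : nat) : nat -> nat -> R :=
  fun r c => A (if Nat.ltb r i then r else S r) (if Nat.ltb c j then c else S c).
Fixpoint det (m : nat) (A : nat -> nat -> R) : R :=
  match m with
  | O => 1
  | S m' => sumn (S m') (fun j => (-1) ^ j * A O j * det m' (minor A O j))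
  end.
Definition cofm (n : nat) (A : nat -> nat -> R) : nat -> nat -> R :=
  fun i j => (-1) ^ (i + j) * det (pred n) (minor A i j).
Definition symm (A : nat -> nat -> R) : nat -> nat -> R :=
  fun i j => (A i j + A j i) / 2.

Definition is_eig (n : nat) (A : nat -> nat -> R) (l : R) : Prop :=
  exists v : pt, canon n v /\ (exists i, (i < n)%nat /\ v i <> 0) /\
    forall i, (i < n)%nat -> sumn n (fun j => A i j * v j) = l * v i.
Definition smallest_eig (n : nat) (A : nat -> nat -> R) (l : R) : Prop :=
  is_eig n A l /\ forall l', is_eig n A l' -> l <= l'.

Definition ball (n : nat) (x : pt) (r : R) (y : pt) : Prop := canon n y /\ distn n x y < r.
Definition open_set_n (n : nat) (S : pt -> Prop) : Prop :=
  forall x, S x -> exists r, 0 < r /\ forall y, ball n x r y -> S y.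
Definition bounded_set (n : nat) (S : pt -> Prop) : Prop :=
  exists M, forall x, S x -> forall i, (i < n)%nat -> Rabs (x i) <= M.
Definition convex_set (n : nat) (S : pt -> Prop) : Prop :=
  forall x y t, S x -> S y -> 0 <= t <= 1 -> S (vadd (vscale t x) (vscale (1 - t) y)).
Definition closure (n : nat) (S : pt -> Prop) (x : pt) : Prop :=
  canon n x /\ forall eps, 0 < eps -> exists y, S y /\ distn n x y < eps.
Definition cont_on (n : nat) (S : pt -> Prop) (F : pt -> R) : Prop :=
  forall x, S x -> forall eps, 0 < eps -> exists del, 0 < del /\
    forall y, S y -> distn n x y < del -> Rabs (F y - F x) < eps.
Definition convex_fun_on (n : nat) (S : pt -> Prop) (F : pt -> R) : Prop :=
  forall x y t, S x -> S y -> 0 <= t <= 1 ->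
    F (vadd (vscale t x) (vscale (1 - t) y)) <= t * F x + (1 - t) * F y.

Definition Omega (n : nat) (x : pt) : Prop :=
  canon n x /\ forall i, (i < n)%nat -> 0 < x i < 1.
Definition OmegaBar (n : nat) (x : pt) : Prop :=
  canon n x /\ forall i, (i < n)%nat -> 0 <= x i <= 1.
Definition Bdry (n : nat) (x : pt) : Prop := OmegaBar n x /\ ~ Omega n x.

(** C^2 functions on an open set S: D1 i = d_i F, D2 i j = d_j d_i F,
    all continuous on S *)
Definition C2_data (n : nat) (S : pt -> Prop) (F : pt -> R)
  (D1 : nat -> pt -> R) (D2 : nat -> nat -> pt -> R) : Prop :=
  cont_on n S F /\
  (forall i, (i < n)%nat -> cont_on n S (D1 i)) /\
  (forall i j, (i < n)%nat -> (j < n)%nat -> cont_on n S (D2 i j)) /\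
  forall y, S y -> forall i j, (i < n)%nat -> (j < n)%nat ->
    derivable_pt_lim (fun t => F (vadd y (vscale t (e i)))) 0 (D1 i y) /\
    derivable_pt_lim (fun t => D1 i (vadd y (vscale t (e j)))) 0 (D2 i j y).
Definition C2_hess (n : nat) (S : pt -> Prop) (F : pt -> R)
  (D2 : nat -> nat -> pt -> R) : Prop := exists D1, C2_data n S F D1 D2.
Definition C2_on (n : nat) (S : pt -> Prop) (F : pt -> R) : Prop :=
  exists D1 D2, C2_data n S F D1 D2.

Definition regular (n : nat) (u : pt -> R) (x : pt) : Prop :=
  exists r, 0 < r /\ C2_on n (ball n x r) u.

(** convex viscosity solution of det D^2 u = f in Omega (Gutierrez' definition,
    convex C^2 test functions) *)
Definition visc_MA (n : nat) (f u : pt -> R) : Prop :=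
  forall x0 r phi D2, Omega n x0 -> 0 < r ->
    C2_hess n (ball n x0 r) phi D2 -> convex_fun_on n (ball n x0 r) phi ->
    ((forall y, ball n x0 r y -> Omega n y -> u y - phi y <= u x0 - phi x0) ->
       f x0 <= det n (fun i j => D2 i j x0)) /\
    ((forall y, ball n x0 r y -> Omega n y -> u x0 - phi x0 <= u y - phi y) ->
       det n (fun i j => D2 i j x0) <= f x0).

Inductive ER : Type := ER_fin (r : R) | ER_pinf | ER_minf.
Definition ER_le (a b : ER) : Prop :=
  match a, b with
  | ER_minf, _ => True
  | _, ER_pinf => True
  | ER_fin x, ER_fin y => x <= y
  | _, _ => False
  end.
Definition ER_opp (a : ER) : ER :=
  match a with ER_fin x => ER_fin (- x) | ER_pinf => ER_minf | ER_minf => ER_pinf end.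

Definition ER_sup (E : ER -> Prop) : ER :=
  match excluded_middle_informative (E ER_pinf) with
  | left _ => ER_pinf
  | right _ =>
    match excluded_middle_informative (exists r, E (ER_fin r)) with
    | right _ => ER_minf
    | left ne =>
      match excluded_middle_informative (bound (fun r => E (ER_fin r))) with
      | left b => ER_fin (proj1_sig (completeness (fun r => E (ER_fin r)) b ne))
      | right _ => ER_pinf
      end
    end
  end.
Definition ER_inf (E : ER -> Prop) : ER := ER_opp (ER_sup (fun y => E (ER_opp y))).

Definition visc_MA_at (n : nat) (f : pt -> R) (w : pt -> ER) (x : pt) : Prop :=
  forall a r phi D2, w x = ER_fin a -> 0 < r ->
    C2_hess n (ball n x r) phi D2 -> convex_fun_on n (ball n x r) phi ->
    ((forall y, ball n x r y -> Omega n y -> ER_le (w y) (ER_fin (phi y + (a - phi x)))) ->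
       f x <= det n (fun i j => D2 i j x)) /\
    ((forall y, ball n x r y -> Omega n y -> ER_le (ER_fin (phi y + (a - phi x))) (w y)) ->
       det n (fun i j => D2 i j x) <= f x).

Definition visc_lam_at (n : nat) (w : pt -> ER) (x : pt) : Prop :=
  forall a r phi D2, w x = ER_fin a -> 0 < r -> C2_hess n (ball n x r) phi D2 ->
    ((forall y, ball n x r y -> Omega n y -> ER_le (w y) (ER_fin (phi y + (a - phi x)))) ->
       forall l, smallest_eig n (fun i j => D2 i j x) l -> Rmax (- l) 0 <= 0) /\
    ((forall y, ball n x r y -> Omega n y -> ER_le (ER_fin (phi y + (a - phi x))) (w y)) ->
       forall l, smallest_eig n (fun i j => D2 i j x) l -> 0 <= Rmax (- l) 0).

Definition hN (N : nat) : R := / INR N.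
Definition on_grid (n N : nat) (x : pt) : Prop :=
  canon n x /\ forall i, (i < n)%nat -> exists z : Z, x i = IZR z * hN N.
Definition OmegaH (n N : nat) (x : pt) : Prop := OmegaBar n x /\ on_grid n N x.
Definition OmegaH0 (n N : nat) (x : pt) : Prop := Omega n x /\ on_grid n N x.
Definition BdryH (n N : nat) (x : pt) : Prop := OmegaH n N x /\ ~ OmegaH0 n N x.

Definition OmegaHr (n N : nat) (Omr : pt -> Prop) (x : pt) : Prop :=
  closure n Omr x /\ on_grid n N x.
(** points where the discrete Hessian uses only values at points of OmegaHr *)
Definition OmegaHr0 (n N : nat) (Omr : pt -> Prop) (x : pt) : Prop :=
  OmegaHr n N Omr x /\
  forall i j, (i < n)%nat -> (j < n)%nat ->
    OmegaHr n N Omr (vadd x (vscale (hN N) (e i))) /\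
    OmegaHr n N Omr (vsub x (vscale (hN N) (e j))) /\
    OmegaHr n N Omr (vsub (vadd x (vscale (hN N) (e i))) (vscale (hN N) (e j))).

Definition dplus (N i : nat) (v : pt -> R) (x : pt) : R :=
  (v (vadd x (vscale (hN N) (e i))) - v x) / hN N.
Definition dminus (N i : nat) (v : pt -> R) (x : pt) : R :=
  (v x - v (vsub x (vscale (hN N) (e i)))) / hN N.
Definition Hd (N : nat) (v : pt -> R) (x : pt) : nat -> nat -> R :=
  fun i j => dminus N j (fun y => dplus N i v y) x.
Definition Wfield (n N : nat) (v : pt -> R) (y : pt) (i : nat) : R :=
  sumn n (fun k => cofm n (symm (Hd N v y)) k i * dplus N k v y).
Definition Mr (n N : nat) (v : pt -> R) (x : pt) : R :=
  / INR n * sumn n (fun i => dminus N i (fun y => Wfield n N v y i) x).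

Definition orth_basis (n : nat) (al : nat -> pt) : Prop :=
  (forall k, (k < n)%nat -> canon n (al k)) /\
  (forall c : nat -> R,
     (forall i, (i < n)%nat -> sumn n (fun k => c k * al k i) = 0) ->
     forall k, (k < n)%nat -> c k = 0) /\
  (forall v, canon n v -> exists c : nat -> R,
     forall i, (i < n)%nat -> v i = sumn n (fun k => c k * al k i)) /\
  (forall k l, (k < n)%nat -> (l < n)%nat -> k <> l -> dot n (al k) (al l) = 0).
Definition Wh (n N : nat) (x : pt) (al : nat -> pt) : Prop :=
  orth_basis n al /\
  forall k, (k < n)%nat -> OmegaH n N (vadd x (al k)) /\ OmegaH n N (vsub x (al k)).
Definition Msval (n : nat) (v : pt -> R) (x : pt) (al : nat -> pt) : R :=
  prodn n (fun k => Rmax ((v (vadd x (al k)) - 2 * v x + v (vsub x (al k)))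
                          / dot n (al k) (al k)) 0).
Definition is_inf (E : R -> Prop) (m : R) : Prop :=
  (forall y, E y -> m <= y) /\ (forall m', (forall y, E y -> m' <= y) -> m' <= m).
Definition Ms_is (n N : nat) (v : pt -> R) (x : pt) (m : R) : Prop :=
  is_inf (fun p => exists al, Wh n N x al /\ p = Msval n v x al) m.

(** sum of F over the grid points {0, h, ..., 1}^n *)
Fixpoint gsum (N d : nat) (F : pt -> R) : R :=
  match d with
  | O => F (fun _ => 0)
  | S d' => sumn (S N) (fun k => gsum N d' (fun p => F (upd p d' (INR k / INR N))))
  end.
Definition indic (P : Prop) : R := if excluded_middle_informative P then 1 else 0.
Definition norm1h (n N : nat) (Omr : pt -> Prop) (v : pt -> R) : R :=
  sqrt (hN N ^ n * sumn n (fun i =>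
     gsum N n (fun x => indic (OmegaHr0 n N Omr x) * (dplus N i v x) ^ 2))).

Definition hybrid_sol (n : nat) (f g u : pt -> R) (Omr : pt -> Prop) (Cs : R)
  (N : nat) (v : pt -> R) : Prop :=
  (forall x, OmegaH0 n N x ->
     (OmegaHr0 n N Omr x -> Mr n N v x = f x) /\
     (~ OmegaHr0 n N Omr x -> Ms_is n N v x (f x))) /\
  (forall x, BdryH n N x -> v x = g x) /\
  norm1h n N Omr (fun y => v y - u y) <= Cs * Rpower (hN N) (2 + INR n / 2) /\
  (forall x, OmegaHr n N Omr x -> ~ OmegaHr0 n N Omr x -> v x = u x).

(** half-relaxed limits; U N is u^h with h = 1/N *)
Definition hr_set (n : nat) (U : nat -> pt -> R) (x : pt) (del : R) (s : ER) : Prop :=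
  exists N y, (1 <= N)%nat /\ hN N <= del /\ OmegaH0 n N y /\ distn n y x <= del /\
    s = ER_fin (U N y).
(** lim_{del -> 0} of a quantity monotone in del = its inf (resp. sup) over del > 0 *)
Definition ustar_up (n : nat) (U : nat -> pt -> R) (x : pt) : ER :=
  ER_inf (fun s => exists del, 0 < del /\ s = ER_sup (hr_set n U x del)).
Definition ustar_low (n : nat) (U : nat -> pt -> R) (x : pt) : ER :=
  ER_sup (fun s => exists del, 0 < del /\ s = ER_inf (hr_set n U x del)).

(* Main.v *)
Require Import Defs.
From Stdlib Require Import Reals ZArith Classical ClassicalEpsilon.
From Stdlib Require Import Lra Lia FunctionalExtensionality.
Open Scope R_scope.

Lemma sumn_ext k F G : (forall i, (i < k)%nat -> F i = G i) -> sumn k F = sumn k G.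
Proof. induction k; simpl; intros H; auto. rewrite IHk by (intros; apply H; lia). rewrite H by lia. auto. Qed.

Lemma sumn_nonneg k F : (forall i, (i < k)%nat -> 0 <= F i) -> 0 <= sumn k F.
Proof. induction k; simpl; intros H; [lra|]. pose proof (H k ltac:(lia)). pose proof (IHk ltac:(intros; apply H; lia)). lra. Qed.

Lemma sumn_le k F G : (forall i, (i < k)%nat -> F i <= G i) -> sumn k F <= sumn k G.
Proof. induction k; simpl; intros H; [lra|]. pose proof (H k ltac:(lia)). pose proof (IHk ltac:(intros; apply H; lia)). lra. Qed.

Lemma sumn_term k F i : (forall j, (j < k)%nat -> 0 <= F j) -> (i < k)%nat -> F i <= sumn k F.
Proof.
  induction k; simpl; intros H Hi; [lia|].
  destruct (Nat.eq_dec i k) as [->|Hne].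
  - pose proof (sumn_nonneg k F ltac:(intros; apply H; lia)). lra.
  - pose proof (IHk ltac:(intros; apply H; lia) ltac:(lia)). pose proof (H k ltac:(lia)). lra.
Qed.

Lemma sumn_plus k F G : sumn k (fun i => F i + G i) = sumn k F + sumn k G.
Proof. induction k; simpl; [lra|]. rewrite IHk. lra. Qed.

Lemma sumn_scal k c F : sumn k (fun i => c * F i) = c * sumn k F.
Proof. induction k; simpl; [lra|]. rewrite IHk. lra. Qed.

Lemma sumn_abs k F : Rabs (sumn k F) <= sumn k (fun i => Rabs (F i)).
Proof. induction k; simpl. rewrite Rabs_R0; lra. eapply Rle_trans. apply Rabs_triang. lra. Qed.

Lemma sumn_const k c : sumn k (fun _ => c) = INR k * c.
Proof. induction k; simpl sumn. simpl; lra. rewrite IHk, S_INR. lra. Qed.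

Lemma dot_self_nonneg n w : 0 <= dot n w w.
Proof. unfold dot. apply sumn_nonneg. intros. nra. Qed.

Lemma coord_le_dist n x y i : (i < n)%nat -> Rabs (x i - y i) <= distn n x y.
Proof.
  intros Hi. unfold distn.
  rewrite <- sqrt_Rsqr_abs. apply sqrt_le_1. apply Rle_0_sqr. apply dot_self_nonneg.
  unfold dot, Rsqr. apply (sumn_term n (fun i => vsub x y i * vsub x y i) i); auto.
  intros; nra.
Qed.

Lemma dist_bound n a b c : 0 <= c -> (forall i, (i < n)%nat -> Rabs (a i - b i) <= c) ->
  distn n a b <= INR n * c.
Proof.
  intros Hc H. unfold distn.
  assert (Hd : dot n (vsub a b) (vsub a b) <= INR n * (c * c)).
  { unfold dot. rewrite <- sumn_const. apply sumn_le. intros i Hi.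
    specialize (H i Hi). unfold vsub.
    assert (Rabs (a i - b i) * Rabs (a i - b i) <= c * c).
    { apply Rmult_le_compat; auto; apply Rabs_pos. }
    rewrite <- Rabs_mult in H0. rewrite Rabs_right in H0. lra.
    apply Rle_ge. apply Rle_0_sqr. }
  assert (Hn : 0 <= INR n) by apply pos_INR.
  rewrite <- (sqrt_square (INR n * c)) by nra.
  apply sqrt_le_1. apply dot_self_nonneg. nra.
  destruct n. simpl in *. nra.
  assert (1 <= INR (S n)) by (rewrite S_INR; pose proof (pos_INR n); lra).
  assert (0 <= c*c) by nra. nra.
Qed.

Lemma distn_sym n x y : distn n x y = distn n y x.
Proof. unfold distn, dot. f_equal. apply sumn_ext. intros. unfold vsub. ring. Qed.

Lemma distn_refl n x : distn n x x = 0.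
Proof. unfold distn, dot. rewrite (sumn_ext n _ (fun _ => 0)). rewrite sumn_const. rewrite Rmult_0_r. apply sqrt_0.
  intros. unfold vsub. ring. Qed.

Lemma dist_offset n y q c : 0 <= c -> (forall i, (i < n)%nat -> Rabs (q i) <= c) ->
  distn n y (vadd y q) <= INR n * c.
Proof. intros Hc H. apply dist_bound; auto. intros i Hi. unfold vadd.
  replace (y i - (y i + q i)) with (- q i) by ring. rewrite Rabs_Ropp. auto. Qed.

Lemma ball_offset n x q c rho : canon n x -> canon n q -> 0 <= c ->
  (forall i, (i < n)%nat -> Rabs (q i) <= c) -> INR n * c < rho -> ball n x rho (vadd x q).
Proof. intros Hx Hq Hc H Hr. split.
  - intros i Hi. unfold vadd. rewrite Hx, Hq by auto. ring.
  - eapply Rle_lt_trans; [apply dist_offset|]; eauto.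
Qed.

Lemma ER_sup_ub E s r : ER_sup E = ER_fin s -> E (ER_fin r) -> r <= s.
Proof.
  unfold ER_sup. intros H Hr.
  destruct (excluded_middle_informative (E ER_pinf)); [discriminate|].
  destruct (excluded_middle_informative (exists r, E (ER_fin r))); [|discriminate].
  destruct (excluded_middle_informative (bound (fun r => E (ER_fin r)))); [|discriminate].
  destruct (completeness _ b e) as [l [Hl1 Hl2]]. simpl in H. inversion H; subst.
  apply Hl1. auto.
Qed.

Lemma ER_sup_not_minf E r : E (ER_fin r) -> ER_sup E <> ER_minf.
Proof.
  unfold ER_sup. intros Hr.
  destruct (excluded_middle_informative (E ER_pinf)); [discriminate|].
  destruct (excluded_middle_informative (exists r, E (ER_fin r))); [|exfalso; eauto].
  destruct (excluded_middle_informative (bound (fun r => E (ER_fin r)))); discriminate.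
Qed.

Lemma ER_sup_bounded E r0 M : ~ E ER_pinf -> E (ER_fin r0) -> (forall r, E (ER_fin r) -> r <= M) ->
  exists s, ER_sup E = ER_fin s /\ s <= M.
Proof.
  unfold ER_sup. intros Hp Hr0 HM.
  destruct (excluded_middle_informative (E ER_pinf)); [tauto|].
  destruct (excluded_middle_informative (exists r, E (ER_fin r))); [|exfalso; eauto].
  destruct (excluded_middle_informative (bound (fun r => E (ER_fin r)))).
  - destruct (completeness _ b e) as [l [Hl1 Hl2]]. simpl. exists l. split; [reflexivity|].
    apply Hl2. intros r Hr. apply HM. auto.
  - exfalso. apply n0. exists M. intros r Hr. apply HM; auto.
Qed.

Lemma hr_limits (A : R -> ER -> Prop) L :
 (forall d s, A d s -> exists r, s = ER_fin r) ->
 (forall d, 0 < d -> forall eps, 0 < eps -> exists r, A d (ER_fin r) /\ Rabs (r - L) < eps) ->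
 (forall eps, 0 < eps -> exists d0, 0 < d0 /\ forall d, 0 < d -> d <= d0 ->
      forall r, A d (ER_fin r) -> Rabs (r - L) < eps) ->
 ER_inf (fun s => exists d, 0 < d /\ s = ER_sup (A d)) = ER_fin L /\
 ER_sup (fun s => exists d, 0 < d /\ s = ER_inf (A d)) = ER_fin L.
Proof.
  intros H1 H2 H3.
  assert (Hnp : forall d, ~ A d ER_pinf) by (intros d Hd; destruct (H1 _ _ Hd); discriminate).
  assert (Hnm : forall d, ~ A d ER_minf) by (intros d Hd; destruct (H1 _ _ Hd); discriminate).
  assert (Hopp : forall d r, A d (ER_fin r) -> (fun y => A d (ER_opp y)) (ER_fin (- r))).
  { intros d r H. simpl. rewrite Ropp_involutive. auto. }
  split.
  - unfold ER_inf. 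
    assert (ER_sup (fun y => exists d, 0 < d /\ ER_opp y = ER_sup (A d)) = ER_fin (- L)).
    2:{ rewrite H. simpl. rewrite Ropp_involutive. auto. }
    set (T := fun y => exists d, 0 < d /\ ER_opp y = ER_sup (A d)).
    assert (Tnp : ~ T ER_pinf).
    { intros [d [Hd E]]. simpl in E. destruct (H2 d Hd 1 Rlt_0_1) as [r [Hr _]].
      apply (ER_sup_not_minf _ _ Hr). auto. }
    assert (Tub : forall r, T (ER_fin r) -> r <= - L).
    { intros r [d [Hd E]]. simpl in E.
      apply Rnot_lt_le. intros Hlt.
      destruct (H2 d Hd (r + L) ltac:(lra)) as [r' [Hr' Habs]].
      pose proof (ER_sup_ub _ _ _ (eq_sym E) Hr'). apply Rabs_def2 in Habs. lra. }
    assert (Tnear : forall eps, 0 < eps -> exists r, T (ER_fin r) /\ - L - eps < r).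
    { intros eps He. destruct (H3 (eps/2) ltac:(lra)) as [d0 [Hd0 Hd0']].
      destruct (H2 d0 Hd0 1 Rlt_0_1) as [r0 [Hr0 _]].
      destruct (ER_sup_bounded (A d0) r0 (L + eps/2) (Hnp d0) Hr0) as [s [Hs Hsle]].
      { intros r Hr. specialize (Hd0' d0 Hd0 (Rle_refl _) r Hr). apply Rabs_def2 in Hd0'. lra. }
      exists (- s). split. exists d0. split; auto. simpl. rewrite Ropp_involutive. auto. lra. }
    unfold ER_sup.
    destruct (excluded_middle_informative (T ER_pinf)); [tauto|].
    destruct (excluded_middle_informative (exists r, T (ER_fin r))).
    2:{ exfalso. destruct (Tnear 1 Rlt_0_1) as [r [Hr _]]. eauto. }
    destruct (excluded_middle_informative (bound (fun r => T (ER_fin r)))).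
    2:{ exfalso. apply n0. exists (- L). intros r Hr; apply Tub; auto. }
    destruct (completeness _ b e) as [l [Hl1 Hl2]]. simpl. f_equal.
    apply Rle_antisym.
    + apply Hl2. intros r Hr. apply Tub; auto.
    + apply Rnot_lt_le. intros Hlt. destruct (Tnear (- L - l) ltac:(lra)) as [r [Hr Hr']].
      pose proof (Hl1 r Hr). lra.
  - set (T := fun s => exists d, 0 < d /\ s = ER_inf (A d)).
    assert (Tnp : ~ T ER_pinf).
    { intros [d [Hd E]]. unfold ER_inf in E. destruct (H2 d Hd 1 Rlt_0_1) as [r [Hr _]].
      apply (ER_sup_not_minf _ _ (Hopp _ _ Hr)).
      destruct (ER_sup (fun y => A d (ER_opp y))); simpl in E; try discriminate; auto. }
    assert (Tub : forall r, T (ER_fin r) -> r <= L).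
    { intros r [d [Hd E]]. unfold ER_inf in E.
      assert (E' : ER_sup (fun y => A d (ER_opp y)) = ER_fin (- r)).
      { destruct (ER_sup (fun y => A d (ER_opp y))); simpl in E; try discriminate.
        inversion E. f_equal. ring. }
      apply Rnot_lt_le. intros Hlt.
      destruct (H2 d Hd (r - L) ltac:(lra)) as [r' [Hr' Habs]].
      pose proof (ER_sup_ub _ _ _ E' (Hopp _ _ Hr')). apply Rabs_def2 in Habs. lra. }
    assert (Tnear : forall eps, 0 < eps -> exists r, T (ER_fin r) /\ L - eps < r).
    { intros eps He. destruct (H3 (eps/2) ltac:(lra)) as [d0 [Hd0 Hd0']].
      destruct (H2 d0 Hd0 1 Rlt_0_1) as [r0 [Hr0 _]].
      destruct (ER_sup_bounded (fun y => A d0 (ER_opp y)) (- r0) (- (L - eps/2)))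
        as [s [Hs Hsle]].
      { simpl. apply Hnm. }
      { apply Hopp; auto. }
      { intros r Hr. simpl in Hr. specialize (Hd0' d0 Hd0 (Rle_refl _) _ Hr).
        apply Rabs_def2 in Hd0'. lra. }
      exists (- s). split. exists d0. split; auto. unfold ER_inf. rewrite Hs. auto. lra. }
    unfold ER_sup.
    destruct (excluded_middle_informative (T ER_pinf)); [tauto|].
    destruct (excluded_middle_informative (exists r, T (ER_fin r))).
    2:{ exfalso. destruct (Tnear 1 Rlt_0_1) as [r [Hr _]]. eauto. }
    destruct (excluded_middle_informative (bound (fun r => T (ER_fin r)))).
    2:{ exfalso. apply n0. exists L. intros r Hr; apply Tub; auto. }
    destruct (completeness _ b e) as [l [Hl1 Hl2]]. simpl. f_equal.
    apply Rle_antisym.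
    + apply Hl2. intros r Hr. apply Tub; auto.
    + apply Rnot_lt_le. intros Hlt. destruct (Tnear (L - l) ltac:(lra)) as [r [Hr Hr']].
      pose proof (Hl1 r Hr). lra.
Qed.

Lemma closure_coords n Omr z : closure n Omr z -> (forall w, Omr w -> Omega n w) ->
  forall i, (i < n)%nat -> 0 <= z i <= 1.
Proof.
  intros [Hc Hcl] HO i Hi. split.
  - apply Rnot_lt_le. intros Hlt. destruct (Hcl (- z i) ltac:(lra)) as [w [Hw Hd]].
    pose proof (coord_le_dist n z w i Hi). destruct (HO w Hw) as [_ Hw']. specialize (Hw' i Hi).
    apply Rle_lt_trans with (2 := Hd) in H. apply Rabs_def2 in H. lra.
  - apply Rnot_lt_le. intros Hlt. destruct (Hcl (z i - 1) ltac:(lra)) as [w [Hw Hd]].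
    pose proof (coord_le_dist n z w i Hi). destruct (HO w Hw) as [_ Hw']. specialize (Hw' i Hi).
    apply Rle_lt_trans with (2 := Hd) in H. apply Rabs_def2 in H. lra.
Qed.

Lemma gsum_nonneg N d F : (forall p, 0 <= F p) -> 0 <= gsum N d F.
Proof. revert F; induction d; intros F H. simpl; auto.
  change (gsum N (S d) F) with (sumn (S N) (fun k => gsum N d (fun p => F (upd p d (INR k / INR N))))).
  apply sumn_nonneg. intros. apply IHd. auto. Qed.

Lemma gsum_term N d F : (forall p, 0 <= F p) -> forall z, (forall i, (d <= i)%nat -> z i = 0) ->
  (forall i, (i < d)%nat -> exists k, (k <= N)%nat /\ z i = INR k / INR N) -> F z <= gsum N d F.
Proof.
  revert F; induction d; intros F HF z Hz Hk.
  - simpl. replace (fun _ : nat => 0) with z. lra. apply functional_extensionality. intros; apply Hz; lia.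
  - change (gsum N (S d) F) with (sumn (S N) (fun k => gsum N d (fun p => F (upd p d (INR k / INR N))))).
    destruct (Hk d ltac:(lia)) as [k0 [Hk0 Hzk]].
    eapply Rle_trans.
    2:{ apply (sumn_term (S N) (fun k => gsum N d (fun p => F (upd p d (INR k / INR N)))) k0).
        intros; apply gsum_nonneg; auto. lia. }
    eapply Rle_trans.
    2:{ apply (IHd (fun p => F (upd p d (INR k0 / INR N)))) with (z := upd z d 0); auto.
        - intros i Hi. unfold upd. destruct (Nat.eqb_spec i d); auto. apply Hz. lia.
        - intros i Hi. unfold upd. destruct (Nat.eqb_spec i d). lia. apply Hk. lia. }
    right. f_equal. apply functional_extensionality. intros i. unfold upd.
    destruct (Nat.eqb_spec i d); subst; auto.
Qed.

Lemma hN_pos N : (1 <= N)%nat -> 0 < hN N.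
Proof. intros. unfold hN. apply Rinv_0_lt_compat. apply lt_0_INR. lia. Qed.

Lemma INR_ge1 N : (1 <= N)%nat -> 1 <= INR N.
Proof. intros. apply (le_INR 1). auto. Qed.

Lemma grid_coord n N z i : (1 <= N)%nat -> on_grid n N z -> (i < n)%nat -> 0 <= z i <= 1 ->
  exists k, (k <= N)%nat /\ z i = INR k / INR N.
Proof.
  intros HN [_ Hg] Hi Hz. destruct (Hg i Hi) as [m Hm]. unfold hN in Hm.
  pose proof (INR_ge1 N HN).
  assert (H0 : (0 <= m)%Z).
  { apply le_IZR. rewrite Hm in Hz. destruct Hz as [Hz _].
    apply Rmult_le_compat_r with (r := INR N) in Hz; [|lra].
    field_simplify in Hz; lra. }
  assert (H1 : (m <= Z.of_nat N)%Z).
  { apply le_IZR. rewrite <- INR_IZR_INZ. rewrite Hm in Hz. destruct Hz as [_ Hz].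
    apply Rmult_le_compat_r with (r := INR N) in Hz; [|lra].
    field_simplify in Hz; lra. }
  exists (Z.to_nat m). split. lia.
  rewrite Hm, (INR_IZR_INZ (Z.to_nat m)), Z2Nat.id by auto. reflexivity.
Qed.

Section Est.
Variables (n : nat) (f g u : pt -> R) (Omr : pt -> Prop) (Cs : R) (N : nat) (v : pt -> R).
Hypothesis Hn : (1 <= n)%nat.
Hypothesis HN : (1 <= N)%nat.
Hypothesis HO : forall z, Omr z -> Omega n z.
Hypothesis Hsol : hybrid_sol n f g u Omr Cs N v.
Let w := fun y => v y - u y.
Let h := hN N.

Lemma dplus_bound z i : (i < n)%nat -> OmegaHr0 n N Omr z ->
  Rabs (dplus N i w z) <= Rabs Cs * h ^ 2.
Proof.
  intros Hi Hz.
  destruct Hsol as [_ [_ [Hnorm _]]]. unfold norm1h in Hnorm. fold w in Hnorm. fold h in Hnorm.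
  pose proof (hN_pos N HN) as Hh. fold h in Hh.
  set (G := fun i x => indic (OmegaHr0 n N Omr x) * dplus N i w x ^ 2).
  set (S := sumn n (fun i => gsum N n (G i))).
  assert (HG : forall i x, 0 <= G i x).
  { intros. unfold G, indic. destruct (excluded_middle_informative _); nra. }
  assert (HT : dplus N i w z ^ 2 <= S).
  { replace (dplus N i w z ^ 2) with (G i z).
    2:{ unfold G, indic. destruct (excluded_middle_informative _); [ring|tauto]. }
    eapply Rle_trans. 2: apply (sumn_term n (fun i => gsum N n (G i)) i); auto.
    2: intros; apply gsum_nonneg; auto.
    destruct Hz as [[Hcl Hg] _].
    pose proof (closure_coords n Omr z Hcl HO) as Hco.
    apply gsum_term; auto. destruct Hcl as [Hc _]; auto.
    intros j Hj. apply (grid_coord n N z j); auto. }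
  fold S in Hnorm.
  set (Rp := Rpower h (2 + INR n / 2)).
  assert (HRp : Rp * Rp = h ^ 4 * h ^ n).
  { unfold Rp. rewrite <- Rpower_plus. rewrite <- pow_add.
    replace (2 + INR n / 2 + (2 + INR n / 2)) with (INR (4 + n)).
    apply Rpower_pow; auto. rewrite plus_INR. simpl. field. }
  assert (HS : 0 <= S) by (apply sumn_nonneg; intros; apply gsum_nonneg; auto).
  assert (Hhn : 0 < h ^ n) by (apply pow_lt; auto).
  assert (Hsq : h ^ n * S <= Cs * Cs * (h ^ 4 * h ^ n)).
  { assert (Hn' : sqrt (h ^ n * S) <= Cs * Rp) by exact Hnorm.
    rewrite <- HRp. pose proof (sqrt_pos (h ^ n * S)).
    rewrite <- (sqrt_sqrt (h ^ n * S)) by nra. nra. }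
  assert (Hd2 : dplus N i w z ^ 2 <= (Rabs Cs * h ^ 2) ^ 2).
  { assert (S <= Cs * Cs * h ^ 4).
    { apply Rmult_le_reg_l with (h ^ n); auto. nra. }
    replace ((Rabs Cs * h ^ 2) ^ 2) with (Cs * Cs * h ^ 4).
    lra. replace ((Rabs Cs * h ^ 2) ^ 2) with ((Rabs Cs * Rabs Cs) * h ^ 4) by ring.
    rewrite <- Rabs_mult. rewrite Rabs_right. ring.
    pose proof (Rle_0_sqr Cs); unfold Rsqr in *; lra. }
  replace (Rabs Cs * h ^ 2) with (Rabs (Rabs Cs * h ^ 2)).
  apply Rsqr_le_abs_0. unfold Rsqr. simpl in Hd2. lra.
  apply Rabs_right. pose proof (Rabs_pos Cs). pose proof (pow_lt h 2 Hh). nra.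
Qed.

Fixpoint zs (y : pt) (k : nat) : pt :=
  match k with O => y | S k' => vadd (zs y k') (vscale h (e 0)) end.

Lemma zs_0 y k : zs y k 0%nat = y 0%nat + INR k * h.
Proof. induction k. simpl. ring. rewrite S_INR. change (zs y (S k)) with (vadd (zs y k) (vscale h (e 0))).
  unfold vadd, vscale, e. rewrite IHk. simpl. ring. Qed.

Lemma walk y (Hy0 : 0 <= y 0%nat) : forall m k, (k + m = S N)%nat -> OmegaHr n N Omr (zs y k) ->
  Rabs (w (zs y k)) <= INR m * (Rabs Cs * h ^ 3).
Proof.
  pose proof (hN_pos N HN) as Hh. fold h in Hh.
  induction m; intros k Hk Hz.
  - exfalso. replace k with (S N) in * by lia.
    destruct Hz as [Hcl _]. pose proof (closure_coords n Omr _ Hcl HO 0 ltac:(lia)).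
    rewrite zs_0 in H. destruct Hcl as [_ Hcl].
    assert (INR (S N) * h > 1).
    { unfold h, hN. rewrite S_INR. pose proof (INR_ge1 N HN).
      replace ((INR N + 1) * / INR N) with (1 + / INR N) by (field; lra).
      pose proof (Rinv_0_lt_compat (INR N) ltac:(lra)). lra. }
    lra.
  - destruct (classic (OmegaHr0 n N Omr (zs y k))) as [H0|H0].
    + assert (Hnext : OmegaHr n N Omr (zs y (S k))).
      { destruct H0 as [_ H0]. destruct (H0 0%nat 0%nat ltac:(lia) ltac:(lia)) as [A _]. exact A. }
      specialize (IHm (S k) ltac:(lia) Hnext).
      pose proof (dplus_bound (zs y k) 0 ltac:(lia) H0). unfold dplus in H. fold h in H.
      change (vadd (zs y k) (vscale h (e 0))) with (zs y (S k)) in H.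
      assert (HD : Rabs (w (zs y (S k)) - w (zs y k)) <= Rabs Cs * h ^ 2 * h).
      { replace (w (zs y (S k)) - w (zs y k)) with ((w (zs y (S k)) - w (zs y k)) / h * h) by (field; lra).
        rewrite Rabs_mult, (Rabs_right h) by lra. apply Rmult_le_compat_r; lra. }
      rewrite S_INR.
      pose proof (Rabs_triang_inv (w (zs y k)) (w (zs y (S k)))).
      rewrite <- Rabs_Ropp in HD. replace (- (w (zs y (S k)) - w (zs y k))) with (w (zs y k) - w (zs y (S k))) in HD by ring.
      simpl pow in *. lra.
    + destruct Hsol as [_ [_ [_ Hr]]]. unfold w. rewrite Hr by auto. 
      replace (u (zs y k) - u (zs y k)) with 0 by ring. rewrite Rabs_R0.
      apply Rmult_le_pos. apply pos_INR. pose proof (Rabs_pos Cs). pose proof (pow_lt h 3 Hh). nra.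
Qed.

Lemma grid_est y : OmegaHr n N Omr y -> Rabs (v y - u y) <= 2 * Rabs Cs * h.
Proof.
  intros Hy. pose proof (hN_pos N HN) as Hh. fold h in Hh.
  assert (Hy0 : 0 <= y 0%nat).
  { destruct Hy as [Hcl _]. apply (closure_coords n Omr y Hcl HO 0); lia. }
  pose proof (walk y Hy0 (S N) 0 ltac:(lia) Hy) as W. simpl zs in W. unfold w in W.
  assert (Hh1 : h <= 1) by (unfold h, hN; pose proof (INR_ge1 N HN); rewrite <- Rinv_1; apply Rinv_le_contravar; lra).
  assert (INR (S N) * h = 1 + h) by (unfold h, hN; rewrite S_INR; pose proof (INR_ge1 N HN); field; lra).
  pose proof (Rabs_pos Cs).
  assert (INR (S N) * (Rabs Cs * h ^ 3) = Rabs Cs * (INR (S N) * h) * (h * h)) by (simpl; ring).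
  rewrite H1, H in W.
  assert ((1 + h) * (h * h) <= 2 * h) by nra.
  assert (Rabs Cs * ((1 + h) * (h * h)) <= Rabs Cs * (2 * h)) by (apply Rmult_le_compat_l; auto).
  lra.
Qed.
End Est.

Lemma exists_N c : 0 < c -> exists N, (1 <= N)%nat /\ hN N < c.
Proof.
  intros Hc. set (t := / c). assert (Ht : 0 < t) by (apply Rinv_0_lt_compat; auto).
  destruct (archimed t) as [H1 _].
  assert (Hz : (0 <= up t)%Z) by (apply le_IZR; lra).
  exists (S (Z.to_nat (up t))). split. lia.
  unfold hN. rewrite S_INR, INR_IZR_INZ, Z2Nat.id by auto.
  replace c with (/ t) by (unfold t; field; lra).
  apply Rinv_lt_contravar. nra. lra.
Qed.

Lemma grid_point n N x : (1 <= N)%nat -> canon n x -> exists y, on_grid n N y /\ canon n y /\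
  forall i, (i < n)%nat -> Rabs (y i - x i) <= hN N.
Proof.
  intros HN Hx. pose proof (hN_pos N HN) as Hh. pose proof (INR_ge1 N HN).
  exists (fun i => if (i <? n)%nat then IZR (up (x i * INR N)) * hN N else 0).
  assert (Hc : canon n (fun i => if (i <? n)%nat then IZR (up (x i * INR N)) * hN N else 0)).
  { intros i Hi. destruct (Nat.ltb_spec i n); [lia|auto]. }
  split; [split; auto|split; auto].
  - intros i Hi. exists (up (x i * INR N)). destruct (Nat.ltb_spec i n); [auto|lia].
  - intros i Hi. destruct (Nat.ltb_spec i n); [|lia].
    destruct (archimed (x i * INR N)) as [A B].
    unfold hN.
    replace (IZR (up (x i * INR N)) * / INR N - x i) with ((IZR (up (x i * INR N)) - x i * INR N) / INR N) by (field; lra).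
    rewrite Rabs_right. unfold Rdiv. rewrite <- (Rmult_1_l (/ INR N)) at 2. apply Rmult_le_compat_r. left; apply Rinv_0_lt_compat; lra. lra.
    apply Rle_ge. unfold Rdiv. apply Rmult_le_pos. lra. left; apply Rinv_0_lt_compat; lra.
Qed.

Lemma Omega_bar n x : Omega n x -> OmegaBar n x.
Proof. intros [H1 H2]. split; auto. intros i Hi. specialize (H2 i Hi). lra. Qed.

Lemma ustar_eq n f g u Omr Cs (U : nat -> pt -> R) x :
  (1 <= n)%nat -> cont_on n (OmegaBar n) u -> open_set_n n Omr ->
  (forall x, Omr x -> Omega n x) ->
  (exists h0, 0 < h0 /\ forall N, (1 <= N)%nat -> hN N < h0 ->
                hybrid_sol n f g u Omr Cs N (U N)) ->
  Omr x -> ustar_low n U x = ER_fin (u x) /\ ustar_up n U x = ER_fin (u x).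
Proof.
  intros Hn Hu Hop HO [h0 [Hh0 Hsol]] Hx.
  destruct (Hop x Hx) as [rho [Hrho Hball]].
  assert (Hxc : canon n x) by (apply HO; auto).
  assert (K : forall eps, 0 < eps -> exists d0, 0 < d0 /\ d0 < rho /\ forall N y, (1 <= N)%nat -> hN N <= d0 ->
     OmegaH0 n N y -> distn n y x <= d0 -> Rabs (U N y - u x) < eps).
  { intros eps He.
    destruct (Hu x (Omega_bar n x (HO x Hx)) (eps/2) ltac:(lra)) as [du [Hdu Hdu']].
    set (d0 := Rmin (Rmin (rho/2) (du/2)) (Rmin (h0/2) (eps / (8 * (Rabs Cs + 1))))).
    pose proof (Rabs_pos Cs).
    assert (Hd0 : 0 < d0).
    { unfold d0. repeat apply Rmin_pos; try lra. apply Rdiv_lt_0_compat; lra. }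
    exists d0. split; auto. split. unfold d0. pose proof (Rmin_l (Rmin (rho/2) (du/2)) (Rmin (h0/2) (eps / (8 * (Rabs Cs + 1))))). pose proof (Rmin_l (rho/2) (du/2)). lra.
    intros N y HN HhN Hy Hdy.
    assert (Hd1 : d0 <= rho/2 /\ d0 <= du/2 /\ d0 <= h0/2 /\ d0 <= eps / (8 * (Rabs Cs + 1))).
    { unfold d0. repeat split.
      - eapply Rle_trans; [apply Rmin_l|apply Rmin_l].
      - eapply Rle_trans; [apply Rmin_l|apply Rmin_r].
      - eapply Rle_trans; [apply Rmin_r|apply Rmin_l].
      - eapply Rle_trans; [apply Rmin_r|apply Rmin_r]. }
    destruct Hd1 as [D1 [D2 [D3 D4]]].
    assert (HsN := Hsol N HN ltac:(lra)).
    assert (HyO : Omr y).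
    { apply Hball. split. destruct Hy as [[Hc _] _]; auto. rewrite distn_sym. lra. }
    assert (Hyr : OmegaHr n N Omr y).
    { split; [|destruct Hy; auto]. split. destruct Hy as [[Hc _] _]; auto.
      intros e0 He0. exists y. split; auto. rewrite distn_refl. auto. }
    pose proof (grid_est n f g u Omr Cs N (U N) Hn HN HO HsN y Hyr) as G.
    assert (Hc1 : Rabs (u y - u x) < eps / 2).
    { apply Hdu'. apply Omega_bar; destruct Hy; auto. rewrite distn_sym. lra. }
    assert (2 * Rabs Cs * hN N < eps / 2).
    { assert (Rabs Cs * d0 <= Rabs Cs * (eps / (8 * (Rabs Cs + 1)))) by (apply Rmult_le_compat_l; lra).
      assert (Rabs Cs * (eps / (8 * (Rabs Cs + 1))) <= eps / 8).
      { unfold Rdiv. rewrite Rinv_mult. 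
        assert (Rabs Cs * / (Rabs Cs + 1) <= 1).
        { apply (Rmult_le_reg_r (Rabs Cs + 1)); [lra|]. rewrite Rmult_assoc, Rinv_l by lra. lra. }
        assert (0 < / (Rabs Cs + 1)) by (apply Rinv_0_lt_compat; lra).
        replace (Rabs Cs * (eps * (/ 8 * / (Rabs Cs + 1)))) with ((Rabs Cs * / (Rabs Cs + 1)) * (eps / 8)) by (unfold Rdiv; ring).
        replace (eps * / 8) with (1 * (eps / 8)) by (unfold Rdiv; ring).
        apply Rmult_le_compat_r; lra. }
      assert (Rabs Cs * hN N <= Rabs Cs * d0) by (apply Rmult_le_compat_l; lra).
      lra. }
    replace (U N y - u x) with ((U N y - u y) + (u y - u x)) by ring.
    eapply Rle_lt_trans. apply Rabs_triang. lra. }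
  assert (Hrec := hr_limits (hr_set n U x) (u x)).
  destruct Hrec as [A B].
  - intros d s [N [y [_ [_ [_ [_ E]]]]]]. eauto.
  - intros d Hd eps He. destruct (K eps He) as [d0 [Hd0 [Hd0r Hd0']]].
    set (d' := Rmin d d0).
    assert (Hd' : 0 < d') by (apply Rmin_pos; auto).
    assert (d' <= d) by apply Rmin_l. assert (d' <= d0) by apply Rmin_r.
    pose proof (pos_INR n).
    destruct (exists_N (d' / (INR n + 1)) ltac:(apply Rdiv_lt_0_compat; lra)) as [N [HN HhN]].
    pose proof (hN_pos N HN).
    assert (HhN' : hN N <= d').
    { assert (d' / (INR n + 1) <= d'). { unfold Rdiv. apply (Rmult_le_reg_r (INR n + 1)); [lra|].
        rewrite Rmult_assoc, Rinv_l by lra. nra. } lra. }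
    destruct (grid_point n N x HN Hxc) as [y [Hg [Hyc Hyx]]].
    assert (Hdist : distn n y x <= d').
    { eapply Rle_trans. apply dist_bound with (c := hN N); [lra|auto].
      apply (Rmult_le_reg_r (/ (INR n + 1))). apply Rinv_0_lt_compat; lra.
      apply Rle_trans with (hN N). 2:{ unfold Rdiv in HhN. lra. }
      apply (Rmult_le_reg_r (INR n + 1)); [lra|]. rewrite Rmult_assoc, Rinv_l by lra. nra. }
    assert (Hy : OmegaH0 n N y).
    { split; auto. apply HO. apply Hball. split; auto. rewrite distn_sym. lra. }
    exists (U N y). split.
    + exists N, y. split; [auto| split; [lra| split; [auto| split; [lra| reflexivity]]]].
    + apply Hd0'; auto; lra.
  - intros eps He. destruct (K eps He) as [d0 [Hd0 [_ Hd0']]]. exists d0. split; auto.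
    intros d Hd Hdd r [N [y [HN [Hh [Hy [Hdy E]]]]]]. inversion E; subst.
    apply Hd0'; auto; lra.
  - split; auto.
Qed.

Lemma MVT_gen (g g' : R -> R) b : (forall c, Rabs c <= Rabs b -> derivable_pt_lim g c (g' c)) ->
  exists c, Rabs c <= Rabs b /\ g b - g 0 = g' c * b.
Proof.
  intros H. destruct (Rtotal_order b 0) as [Hb|[Hb|Hb]].
  - destruct (MVT_cor2 g g' b 0 Hb) as [c [Hc1 Hc2]].
    { intros c Hc. apply H. rewrite !Rabs_left1 by lra. lra. }
    exists c. split. rewrite !Rabs_left1 by lra. lra. lra.
  - subst. exists 0. split. rewrite Rabs_R0; lra. ring.
  - destruct (MVT_cor2 g g' 0 b Hb) as [c [Hc1 Hc2]].
    { intros c Hc. apply H. rewrite !Rabs_right by lra. lra. }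
    exists c. split. rewrite !Rabs_right by lra. lra. lra.
Qed.

Definition nbhd n (S : pt -> Prop) y g := forall q, canon n q ->
  (forall i, (i < n)%nat -> Rabs (q i) <= g) -> S (vadd y q).

Definition off (v : pt) (k : nat) (t s : R) : pt :=
  fun i => (if (i <? k)%nat then t * v i else 0) + s * e k i.

Lemma vadd_zero y : vadd y (fun _ => 0) = y.
Proof. apply functional_extensionality. intros; unfold vadd; ring. Qed.

Lemma canon_zero n : canon n (fun _ => 0).
Proof. intros i _; auto. Qed.

Lemma e_ne k i : i <> k -> e k i = 0.
Proof. intros H. unfold e. destruct (Nat.eqb_spec i k); auto; lia. Qed.
Lemma e_eq k : e k k = 1.
Proof. unfold e. rewrite Nat.eqb_refl. auto. Qed.

Lemma off_canon n v k t s : canon n v -> (k < n)%nat -> canon n (off v k t s).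
Proof. intros Hv Hk i Hi. unfold off. destruct (Nat.ltb_spec i k); [lia|]. rewrite e_ne by lia. ring. Qed.

Lemma off_canon0 n v k t : canon n v -> (k <= n)%nat -> canon n (off v k t 0).
Proof. intros Hv Hk i Hi. unfold off. destruct (Nat.ltb_spec i k); [lia|]. ring. Qed.

Lemma off_bound n v k t s V : (forall i, (i < n)%nat -> Rabs (v i) <= V) ->
  forall i, (i < n)%nat -> Rabs (off v k t s i) <= Rabs t * V + Rabs s.
Proof.
  intros HV i Hi. unfold off. eapply Rle_trans. apply Rabs_triang.
  apply Rplus_le_compat.
  - destruct (Nat.ltb_spec i k). rewrite Rabs_mult. apply Rmult_le_compat_l. apply Rabs_pos. auto.
    rewrite Rabs_R0. apply Rmult_le_pos. apply Rabs_pos. specialize (HV i Hi). pose proof (Rabs_pos (v i)). lra.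
  - rewrite Rabs_mult. unfold e. destruct (Nat.eqb i k); [rewrite Rabs_R1|rewrite Rabs_R0]; pose proof (Rabs_pos s); lra.
Qed.

Lemma off_step v k t : off v k t (t * v k) = off v (S k) t 0.
Proof.
  apply functional_extensionality. intros i. unfold off.
  destruct (Nat.ltb_spec i k); destruct (Nat.ltb_spec i (S k)); try lia.
  - rewrite !e_ne by lia. ring.
  - assert (i = k) by lia. subst. rewrite !e_eq. ring.
  - rewrite !e_ne by lia. ring.
Qed.

Lemma off_0 v t : off v 0 t 0 = fun _ => 0.
Proof. apply functional_extensionality. intros i. unfold off. destruct (Nat.ltb_spec i 0); [lia|]. ring. Qed.

Lemma off_n n v t : canon n v -> off v n t 0 = vscale t v.
Proof. intros Hv. apply functional_extensionality. intros i. unfold off, vscale.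
  destruct (Nat.ltb_spec i n). ring. rewrite Hv by lia. ring. Qed.

Lemma off_shift y v k t c s : vadd y (off v k t (c + s)) = vadd (vadd y (off v k t c)) (vscale s (e k)).
Proof. apply functional_extensionality. intros i. unfold vadd, off, vscale. ring. Qed.

Section Core.
Variables (n : nat) (Sset : pt -> Prop) (F : pt -> R) (P : nat -> pt -> R) (y v : pt) (gam : R).
Hypothesis Hgam : 0 < gam.
Hypothesis Hv : canon n v.
Hypothesis Hnb : nbhd n Sset y gam.
Hypothesis HPc : forall j, (j < n)%nat -> cont_on n Sset (P j).
Hypothesis HF : forall z, Sset z -> forall j, (j < n)%nat ->
  derivable_pt_lim (fun s => F (vadd z (vscale s (e j)))) 0 (P j z).

Let V := sumn n (fun i => Rabs (v i)) + 1.
Lemma V_pos : 0 < V.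
Proof. unfold V. pose proof (sumn_nonneg n (fun i => Rabs (v i)) ltac:(intros; apply Rabs_pos)). lra. Qed.
Lemma V_bound : forall i, (i < n)%nat -> Rabs (v i) <= V.
Proof. intros i Hi. unfold V. pose proof (sumn_term n (fun i => Rabs (v i)) i ltac:(intros; apply Rabs_pos) Hi). lra. Qed.

Lemma Sy : Sset y.
Proof. rewrite <- (vadd_zero y). apply Hnb. apply canon_zero. intros. rewrite Rabs_R0. lra. Qed.

Lemma stepA k : (k < n)%nat -> forall eps, 0 < eps -> exists d, 0 < d /\ forall t, t <> 0 -> Rabs t < d ->
  Rabs ((F (vadd y (off v k t (t * v k))) - F (vadd y (off v k t 0))) / t - v k * P k y) <= eps.
Proof.
  intros Hk eps He. pose proof V_pos as HV0.
  destruct (HPc k Hk y Sy (eps / V) ltac:(apply Rdiv_lt_0_compat; lra)) as [dc [Hdc Hdc']].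
  pose proof (pos_INR n).
  set (d := Rmin (gam / (2 * V)) (dc / (2 * V * (INR n + 1)))).
  assert (Hd : 0 < d). { unfold d. apply Rmin_pos; apply Rdiv_lt_0_compat; nra. }
  exists d. split; auto. intros t Ht Htd.
  assert (Htd1 : Rabs t * (2 * V) <= gam).
  { assert (d <= gam / (2 * V)) by apply Rmin_l.
    apply (Rmult_le_reg_r (/ (2 * V))). apply Rinv_0_lt_compat; lra.
    rewrite Rmult_assoc, Rinv_r by lra. unfold Rdiv in *. lra. }
  assert (Htd2 : Rabs t * (2 * V * (INR n + 1)) <= dc).
  { assert (d <= dc / (2 * V * (INR n + 1))) by apply Rmin_r.
    apply (Rmult_le_reg_r (/ (2 * V * (INR n + 1)))). apply Rinv_0_lt_compat; nra.
    rewrite Rmult_assoc, Rinv_r by nra. unfold Rdiv in *. lra. }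
  set (g := fun s => F (vadd y (off v k t s))).
  set (g' := fun s => P k (vadd y (off v k t s))).
  assert (Hin : forall c, Rabs c <= Rabs (t * v k) -> Sset (vadd y (off v k t c))).
  { intros c Hc. apply Hnb. apply off_canon; auto. intros i Hi.
    eapply Rle_trans. apply (off_bound n) with (V := V). apply V_bound. auto.
    rewrite Rabs_mult in Hc. pose proof (V_bound k Hk). pose proof (Rabs_pos t).
    assert (Rabs t * Rabs (v k) <= Rabs t * V) by (apply Rmult_le_compat_l; lra). nra. }
  destruct (MVT_gen g g' (t * v k)) as [c [Hc Hg]].
  { intros c Hc. unfold g, g'.
    pose proof (HF _ (Hin c Hc) k Hk) as D.
    intros eps' He'. destruct (D eps' He') as [dl Hdl]. exists dl. intros h0 Hh0 Hh0'.
    specialize (Hdl h0 Hh0 Hh0'). rewrite off_shift.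
    assert (E : vadd (vadd y (off v k t c)) (vscale 0 (e k)) = vadd y (off v k t c)).
    { apply functional_extensionality; intros i; unfold vadd, vscale; ring. }
    rewrite E, Rplus_0_l in Hdl. exact Hdl. }
  unfold g in Hg. rewrite Hg. unfold g'.
  replace (P k (vadd y (off v k t c)) * (t * v k) / t - v k * P k y) with
    (v k * (P k (vadd y (off v k t c)) - P k y)) by (field; auto).
  rewrite Rabs_mult.
  assert (Hcl : Rabs (P k (vadd y (off v k t c)) - P k y) < eps / V).
  { apply Hdc'. apply Hin; auto.
    eapply Rle_lt_trans. apply (dist_offset n) with (c := Rabs t * V + Rabs t * V).
    pose proof (Rabs_pos t); nra.
    intros i Hi. eapply Rle_trans. apply (off_bound n) with (V := V). apply V_bound. auto.
    rewrite Rabs_mult in Hc. pose proof (V_bound k Hk). pose proof (Rabs_pos t).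
    assert (Rabs t * Rabs (v k) <= Rabs t * V) by (apply Rmult_le_compat_l; lra). lra.
    assert (0 < Rabs t) by (apply Rabs_pos_lt; auto).
    assert (INR n * (Rabs t * V + Rabs t * V) < Rabs t * (2 * V * (INR n + 1))) by nra. lra. }
  pose proof (V_bound k Hk).
  apply Rle_trans with (V * (eps / V)).
  apply Rmult_le_compat; try apply Rabs_pos; lra.
  right. field. lra.
Qed.

Lemma stepB : forall m, (m <= n)%nat -> forall eps, 0 < eps -> exists d, 0 < d /\ forall t, t <> 0 -> Rabs t < d ->
  Rabs ((F (vadd y (off v m t 0)) - F y) / t - sumn m (fun j => v j * P j y)) <= eps.
Proof.
  induction m; intros Hm eps He.
  - exists 1. split. lra. intros t Ht _. rewrite off_0, vadd_zero. simpl.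
    replace ((F y - F y) / t - 0) with 0 by (field; auto). rewrite Rabs_R0. lra.
  - destruct (IHm ltac:(lia) (eps/2) ltac:(lra)) as [d1 [Hd1 H1]].
    destruct (stepA m ltac:(lia) (eps/2) ltac:(lra)) as [d2 [Hd2 H2]].
    exists (Rmin d1 d2). split. apply Rmin_pos; auto. intros t Ht Htd.
    specialize (H1 t Ht (Rlt_le_trans _ _ _ Htd (Rmin_l _ _))).
    specialize (H2 t Ht (Rlt_le_trans _ _ _ Htd (Rmin_r _ _))).
    rewrite off_step in H2. simpl sumn.
    replace ((F (vadd y (off v (S m) t 0)) - F y) / t - (sumn m (fun j => v j * P j y) + v m * P m y))
      with (((F (vadd y (off v m t 0)) - F y) / t - sumn m (fun j => v j * P j y)) +
            ((F (vadd y (off v (S m) t 0)) - F (vadd y (off v m t 0))) / t - v m * P m y)) by (field; auto).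
    eapply Rle_trans. apply Rabs_triang. lra.
Qed.

Lemma core : derivable_pt_lim (fun t => F (vadd y (vscale t v))) 0 (sumn n (fun j => v j * P j y)).
Proof.
  intros eps He. destruct (stepB n (le_n n) (eps/2) ltac:(lra)) as [d [Hd H]].
  exists (mkposreal d Hd). intros h0 Hh0 Hh0'. simpl in Hh0'.
  specialize (H h0 Hh0 Hh0'). rewrite off_n in H by auto.
  rewrite Rplus_0_l.
  replace (vadd y (vscale 0 v)) with y. lra.
  apply functional_extensionality; intros i; unfold vadd, vscale; ring.
Qed.
End Core.

Lemma deriv_shift g c l : derivable_pt_lim (fun s => g (c + s)) 0 l -> derivable_pt_lim g c l.
Proof.
  intros H eps He. destruct (H eps He) as [d Hd]. exists d. intros h0 Hh0 Hh0'.
  specialize (Hd h0 Hh0 Hh0'). rewrite Rplus_0_l, Rplus_0_r in Hd. exact Hd.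
Qed.

Lemma second_order (G G' : R -> R) del Q : 0 < del ->
  (forall t, Rabs t < del -> derivable_pt_lim G t (G' t)) -> derivable_pt_lim G' 0 Q ->
  (forall t, Rabs t < del -> 0 <= G t + G (- t) - 2 * G 0) -> 0 <= Q.
Proof.
  intros Hdel HG HG' HH. apply Rnot_lt_le. intros HQ.
  destruct (HG' (- Q / 2) ltac:(lra)) as [d2 Hd2].
  set (m := Rmin del d2).
  assert (Hm : 0 < m) by (apply Rmin_pos; [lra| apply cond_pos]).
  assert (Hm1 : m <= del) by apply Rmin_l. assert (Hm2 : m <= d2) by apply Rmin_r.
  assert (Kd : forall s, 0 < s < m -> G' s - G' (- s) < 0).
  { intros s Hs.
    assert (A := Hd2 s ltac:(lra) ltac:(rewrite Rabs_right; lra)).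
    assert (B := Hd2 (- s) ltac:(lra) ltac:(rewrite Rabs_Ropp, Rabs_right; lra)).
    rewrite Rplus_0_l in A, B. apply Rabs_def2 in A. apply Rabs_def2 in B.
    destruct A as [A _]. destruct B as [B _].
    assert (A' : G' s - G' 0 < Q / 2 * s).
    { assert ((G' s - G' 0) / s < Q / 2) by lra.
      apply (Rmult_lt_compat_r s) in H; [|lra]. unfold Rdiv in H. rewrite Rmult_assoc, Rinv_l in H by lra. lra. }
    assert (B' : G' (- s) - G' 0 > Q / 2 * (- s)).
    { assert ((G' (- s) - G' 0) / (- s) < Q / 2) by lra.
      apply (Rmult_lt_compat_r s) in H; [|lra].
      replace ((G' (- s) - G' 0) / - s * s) with (- (G' (- s) - G' 0)) in H by (field; lra). lra. }
    nra. }
  set (t := m / 2).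
  destruct (MVT_cor2 (fun s => G s + G (- s)) (fun s => G' s - G' (- s)) 0 t ltac:(unfold t; lra)) as [c [Hc1 Hc2]].
  { intros c Hc.
    assert (D1 := HG c ltac:(rewrite Rabs_right; unfold t in *; lra)).
    assert (D2 := HG (- c) ltac:(rewrite Rabs_Ropp, Rabs_right; unfold t in *; lra)).
    assert (Dop : derivable_pt_lim (fun s => - s) c (-1)).
    { replace (fun s => - s) with (- id)%F by reflexivity. apply derivable_pt_lim_opp. apply derivable_pt_lim_id. }
    pose proof (derivable_pt_lim_comp (fun s => - s) G c (-1) (G' (- c)) Dop D2) as D3.
    pose proof (derivable_pt_lim_plus _ _ _ _ _ D1 D3) as D4.
    replace (G' c - G' (- c)) with (G' c + G' (- c) * -1) by ring. exact D4. }
  specialize (Kd c ltac:(unfold t in *; lra)).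
  specialize (HH t ltac:(rewrite Rabs_right; unfold t; lra)).
  rewrite Ropp_0 in Hc1. unfold t in *. nra.
Qed.

Lemma deriv_sumn (f : nat -> R -> R) (l : nat -> R) (v : pt) k :
  (forall j, (j < k)%nat -> derivable_pt_lim (f j) 0 (l j)) ->
  derivable_pt_lim (fun t => sumn k (fun j => v j * f j t)) 0 (sumn k (fun j => v j * l j)).
Proof.
  induction k; intros H.
  - simpl. apply derivable_pt_lim_const.
  - simpl. apply (derivable_pt_lim_plus (fun t => sumn k (fun j => v j * f j t)) (fun t => v k * f k t)).
    apply IHk; auto. apply (derivable_pt_lim_scal (f k)). apply H. lia.
Qed.

Lemma vadd_assoc x a q : vadd (vadd x a) q = vadd x (vadd a q).
Proof. apply functional_extensionality; intros i; unfold vadd; ring. Qed.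

Lemma ball_mono n x r r' y : r <= r' -> ball n x r y -> ball n x r' y.
Proof. intros H [H1 H2]. split; auto. lra. Qed.

Lemma lam_core n u (Omr : pt -> Prop) x r phi D1 D2 rho l :
  (1 <= n)%nat -> canon n x -> convex_fun_on n (Omega n) u ->
  (forall y, Omr y -> Omega n y) -> 0 < rho -> (forall y, ball n x rho y -> Omr y) ->
  0 < r -> C2_data n (ball n x r) phi D1 D2 ->
  (forall y, ball n x r y -> Omr y -> u y <= phi y + (u x - phi x)) ->
  is_eig n (fun i j => D2 i j x) l -> 0 <= l.
Proof.
  intros Hn Hx Hcv HOm Hrho Hball Hr HC Htouch Heig.
  destruct Heig as [v [Hvc [[i0 [Hi0 Hvi0]] Heq]]].
  destruct HC as [Hphic [HD1c [HD2c HDer]]].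
  set (V := sumn n (fun i => Rabs (v i)) + 1).
  assert (HV0 : 0 < V) by (apply (V_pos n v)).
  assert (HVb : forall i, (i < n)%nat -> Rabs (v i) <= V) by (apply (V_bound n v)).
  pose proof (pos_INR n) as Hn0.
  set (m := Rmin r rho). assert (Hm : 0 < m) by (apply Rmin_pos; auto).
  assert (Hmr : m <= r) by apply Rmin_l. assert (Hmrho : m <= rho) by apply Rmin_r.
  set (gam := m / (4 * (INR n + 1))).
  assert (Hgam : 0 < gam) by (apply Rdiv_lt_0_compat; lra).
  set (del := gam / V).
  assert (Hdel : 0 < del) by (apply Rdiv_lt_0_compat; lra).
  assert (memb : forall t q, canon n q -> (forall i, (i < n)%nat -> Rabs (q i) <= gam) -> Rabs t < del ->
            ball n x r (vadd (vadd x (vscale t v)) q) /\ Omr (vadd (vadd x (vscale t v)) q)).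
  { intros t q Hq Hqb Ht. rewrite vadd_assoc.
    assert (Hb : ball n x m (vadd x (vadd (vscale t v) q))).
    { apply ball_offset with (c := Rabs t * V + gam); auto.
      - intros i Hi. unfold vadd, vscale. rewrite Hvc, Hq by auto. ring.
      - pose proof (Rabs_pos t). nra.
      - intros i Hi. unfold vadd, vscale. eapply Rle_trans. apply Rabs_triang.
        rewrite Rabs_mult. specialize (Hqb i Hi). specialize (HVb i Hi).
        assert (Rabs t * Rabs (v i) <= Rabs t * V) by (apply Rmult_le_compat_l; [apply Rabs_pos|lra]). lra.
      - assert (Rabs t * V < gam).
        { unfold del in Ht. apply (Rmult_lt_compat_r V) in Ht; auto. unfold Rdiv in Ht.
          rewrite Rmult_assoc, Rinv_l in Ht by lra. lra. }
        assert (INR n * gam * 2 < m).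
        { unfold gam. unfold Rdiv. 
          replace (INR n * (m * / (4 * (INR n + 1))) * 2) with (m * (INR n / (INR n + 1)) / 2) by (field; lra).
          assert (INR n / (INR n + 1) < 1).
          { apply (Rmult_lt_reg_r (INR n + 1)); [lra|]. unfold Rdiv. rewrite Rmult_assoc, Rinv_l by lra. lra. }
          assert (0 <= INR n / (INR n + 1)) by (unfold Rdiv; apply Rmult_le_pos; [lra|left; apply Rinv_0_lt_compat; lra]). nra. }
        nra. }
    split. apply ball_mono with m; auto. apply Hball. apply ball_mono with m; auto. }
  assert (Hq0 : forall i, (i < n)%nat -> Rabs ((fun _ : nat => 0) i) <= gam) by (intros; rewrite Rabs_R0; lra).
  set (G := fun t => phi (vadd x (vscale t v))).
  set (G' := fun t => sumn n (fun j => v j * D1 j (vadd x (vscale t v)))).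
  set (Q := sumn n (fun j => v j * sumn n (fun i => v i * D2 j i x))).
  assert (Hx0 : vadd x (vscale 0 v) = x) by (apply functional_extensionality; intros i; unfold vadd, vscale; ring).
  assert (HG : forall t, Rabs t < del -> derivable_pt_lim G t (G' t)).
  { intros t Ht. apply deriv_shift.
    assert (E : (fun s => G (t + s)) = (fun s => phi (vadd (vadd x (vscale t v)) (vscale s v)))).
    { apply functional_extensionality; intros s. unfold G. f_equal.
      apply functional_extensionality; intros i. unfold vadd, vscale. ring. }
    rewrite E. unfold G'.
    apply (core n (ball n x r) phi D1 (vadd x (vscale t v)) v gam); auto.
    - intros q Hq Hqb. apply (memb t q Hq Hqb Ht).
    - intros z Hz j Hj. apply (HDer z Hz j j Hj Hj). }
  assert (HG' : derivable_pt_lim G' 0 Q).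
  { unfold G', Q. apply (deriv_sumn (fun j t => D1 j (vadd x (vscale t v)))).
    intros j Hj.
    apply (core n (ball n x r) (D1 j) (D2 j) x v gam); auto.
    - intros q Hq Hqb. pose proof (memb 0 q Hq Hqb ltac:(rewrite Rabs_R0; lra)) as [A _].
      rewrite Hx0 in A. exact A.
    - intros z Hz i Hi. apply (HDer z Hz j i Hj Hi). }
  assert (HH : forall t, Rabs t < del -> 0 <= G t + G (- t) - 2 * G 0).
  { intros t Ht. unfold G. rewrite Hx0.
    pose proof (memb t _ (canon_zero n) Hq0 Ht) as [B1 O1].
    pose proof (memb (- t) _ (canon_zero n) Hq0 ltac:(rewrite Rabs_Ropp; auto)) as [B2 O2].
    rewrite vadd_zero in B1, O1, B2, O2.
    pose proof (Htouch _ B1 O1). pose proof (Htouch _ B2 O2).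
    pose proof (Hcv _ _ (1/2) (HOm _ O1) (HOm _ O2) ltac:(lra)) as C.
    assert (E : vadd (vscale (1/2) (vadd x (vscale t v))) (vscale (1 - 1/2) (vadd x (vscale (- t) v))) = x).
    { apply functional_extensionality; intros i; unfold vadd, vscale. field. }
    rewrite E in C. clear E. lra. }
  pose proof (second_order G G' del Q Hdel HG HG' HH) as HQ.
  assert (EQ : Q = l * sumn n (fun j => v j * v j)).
  { unfold Q. rewrite <- sumn_scal. apply sumn_ext. intros j Hj.
    specialize (Heq j Hj). simpl in Heq.
    rewrite (sumn_ext n (fun i => v i * D2 j i x) (fun i => D2 j i x * v i)) by (intros; ring).
    rewrite Heq. ring. }
  assert (Hpos : 0 < sumn n (fun j => v j * v j)).
  { pose proof (sumn_term n (fun j => v j * v j) i0 ltac:(intros; nra) Hi0).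
    assert (0 < v i0 * v i0) by (apply (Rsqr_pos_lt (v i0)); auto). lra. }
  rewrite EQ in HQ. nra.
Qed.

Lemma C2_restrict n S S' phi D2 : (forall y, S' y -> S y) -> C2_hess n S phi D2 -> C2_hess n S' phi D2.
Proof.
  intros Hs [D1 [H1 [H2 [H3 H4]]]]. exists D1. split; [|split; [|split]].
  - intros y Hy eps He. destruct (H1 y (Hs y Hy) eps He) as [d [Hd Hd']]. exists d. split; auto.
  - intros i Hi y Hy eps He. destruct (H2 i Hi y (Hs y Hy) eps He) as [d [Hd Hd']]. exists d. split; auto.
  - intros i j Hi Hj y Hy eps He. destruct (H3 i j Hi Hj y (Hs y Hy) eps He) as [d [Hd Hd']]. exists d. split; auto.
  - intros y Hy i j Hi Hj. apply (H4 y (Hs y Hy) i j Hi Hj).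
Qed.

Lemma vma n f u (Omr : pt -> Prop) (w : pt -> ER) x :
  visc_MA n f u -> open_set_n n Omr -> (forall y, Omr y -> Omega n y) ->
  (forall y, Omr y -> w y = ER_fin (u y)) -> Omr x -> visc_MA_at n f w x.
Proof.
  intros Hv Hop HO Hw Hx a r phi D2 Hwx Hr HC Hcv.
  rewrite Hw in Hwx by auto. inversion Hwx; subst a.
  destruct (Hop x Hx) as [rho [Hrho Hball]].
  set (r' := Rmin r rho). assert (Hr' : 0 < r') by (apply Rmin_pos; auto).
  assert (H1 : r' <= r) by apply Rmin_l. assert (H2 : r' <= rho) by apply Rmin_r.
  destruct (Hv x r' phi D2 (HO x Hx) Hr') as [A B].
  - apply (C2_restrict n (ball n x r)); auto. intros y Hy; apply ball_mono with r'; auto.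
  - intros y z t Hy Hz Ht. apply Hcv; auto; apply ball_mono with r'; auto.
  - split; intros Ht; [apply A|apply B]; intros y Hy HyO;
      assert (Hyr : ball n x r y) by (apply ball_mono with r'; auto);
      assert (HyO' : Omr y) by (apply Hball; apply ball_mono with r'; auto);
      specialize (Ht y Hyr HyO); rewrite Hw in Ht by auto; simpl in Ht; lra.
Qed.

Lemma vlam n u (Omr : pt -> Prop) (w : pt -> ER) x :
  (1 <= n)%nat -> convex_fun_on n (Omega n) u -> open_set_n n Omr -> (forall y, Omr y -> Omega n y) ->
  (forall y, Omr y -> w y = ER_fin (u y)) -> Omr x -> visc_lam_at n w x.
Proof.
  intros Hn Hcv Hop HO Hw Hx a r phi D2 Hwx Hr [D1 HC].
  rewrite Hw in Hwx by auto. inversion Hwx; subst a.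
  destruct (Hop x Hx) as [rho [Hrho Hball]].
  split.
  - intros Ht l [Hl _]. apply Rmax_lub; [|lra].
    assert (0 <= l); [|lra].
    apply (lam_core n u Omr x r phi D1 D2 rho l Hn ltac:(apply HO; auto) Hcv HO Hrho Hball Hr HC); auto.
    intros y Hy HyO. specialize (Ht y Hy (HO y HyO)). rewrite Hw in Ht by auto. simpl in Ht. lra.
  - intros _ l _. apply Rmax_r.
Qed.

Theorem mainTheorem5 (n : nat) (f g u : pt -> R) (Omr : pt -> Prop) (Cs : R)
  (U : nat -> pt -> R) :
  (2 <= n)%nat ->
  cont_on n (OmegaBar n) f -> (forall x, OmegaBar n x -> 0 < f x) ->
  cont_on n (Bdry n) g ->
  (exists gt, cont_on n (OmegaBar n) gt /\ convex_fun_on n (OmegaBar n) gt /\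
              forall x, Bdry n x -> gt x = g x) ->
  cont_on n (OmegaBar n) u -> convex_fun_on n (Omega n) u ->
  (forall x, Bdry n x -> u x = g x) -> visc_MA n f u ->
  open_set_n n Omr -> bounded_set n Omr -> convex_set n Omr ->
  (forall x, Omr x -> Omega n x) -> (forall x, Omr x -> regular n u x) ->
  (exists h0, 0 < h0 /\ forall N, (1 <= N)%nat -> hN N < h0 ->
                hybrid_sol n f g u Omr Cs N (U N)) ->
  forall x, Omr x ->
    ustar_low n U x = ER_fin (u x) /\ ustar_up n U x = ER_fin (u x) /\
    visc_MA_at n f (ustar_low n U) x /\ visc_MA_at n f (ustar_up n U) x /\
    visc_lam_at n (ustar_low n U) x /\ visc_lam_at n (ustar_up n U) x.
Proof.
  intros Hn Hf Hfp Hg Hgt Hu Hcv Hug Hvisc Hop Hbd Hcvx HO Hreg Hsol x Hx.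
  assert (Hn1 : (1 <= n)%nat) by lia.
  assert (HE : forall y, Omr y -> ustar_low n U y = ER_fin (u y) /\ ustar_up n U y = ER_fin (u y)).
  { intros y Hy. apply (ustar_eq n f g u Omr Cs U y Hn1 Hu Hop HO Hsol Hy). }
  destruct (HE x Hx) as [E1 E2].
  split; [auto|split; [auto|]].
  split; [apply (vma n f u Omr); auto; intros y Hy; apply HE; auto|].
  split; [apply (vma n f u Omr); auto; intros y Hy; apply HE; auto|].
  split; apply (vlam n u Omr); auto; intros y Hy; apply HE; auto.
Qed.
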